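(* Let $n\ge2$, $A\in\mathbb{R}^{n\times m}$, $B\in\mathbb{R}^{m\times n}$, and let $W$ be a cycle in $G_{A,B}$ with vertex sequence $(S_{i_1},R_{j_1},\dots,S_{i_N},R_{j_N},S_{i_1})$. (i) A cycle $C$ in $G^{[2]}_{A,B}$ is an external lifting of $W$ if and only if there exists $p\notin\{i_1,\dots,i_N\}$ such that $C=(i_1p,\,j_1^p,\,i_2p,\,j_2^p,\dots,i_Np,\,j_N^p,\,i_1p)$. (ii) If $C$ is an internal lifting of $W$, then every S-vertex of $C$ is of the form $ab$ with $a,b\in\{i_1,\dots,i_N\}$.
   Context: DSR graphs: for $A\in\mathbb{R}^{n\times m}$, $B\in\mathbb{R}^{m\times n}$, $G_{A,B}$ is the signed bipartite digraph with S-vertices $S_1,\dots,S_n$ and R-vertices $R_1,\dots,R_m$, an arc $R_j\to S_i$ of sign $\mathrm{sign}(A_{ij})$ iff $A_{ij}\ne0$, an arc $S_i\to R_j$ of sign $\mathrm{sign}(B_{ji})$ iff $B_{ji}\ne0$, with antiparallel arcs of equal sign merged into an undirected edge. Walks traverse edges consistently with orientation (empty walks allowed); a cycle is a nonempty closed walk with no repeated vertex except first$=$last. DSR$^{[2]}$ graph: $\overline{\mathbf L}^A\in\mathbb{R}^{\binom n2\times mn}$ has rows indexed by $(i,j)$, $i<j$, columns by $(k,l)$, $1\le k\le m$, $1\le l\le n$, entries $A_{jk}$ if $l=i$, $-A_{ik}$ if $l=j$, $0$ otherwise; $\underline{\mathbf L}^B\in\mathbb{R}^{mn\times\binom n2}$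 has $(k,l),(i,j)$ entry $B_{kj}$ if $l=i$, $-B_{ki}$ if $l=j$, $0$ otherwise. $G^{[2]}_{A,B}:=G_{\overline{\mathbf L}^A,\underline{\mathbf L}^B}$, with S-vertices $ij=ji$ ($i\ne j$) and R-vertices $k^l$; an edge $(ij,k^l)$ exists only if $l\in\{i,j\}$. The projection $\pi$ sends an edge $(ij,k^j)$ to the edge $(S_i,R_k)$ of $G_{A,B}$. Direct/twisted and $\pi(C)$ for a cycle $C$ of $G^{[2]}_{A,B}$: let $C$ have S-vertex sequence $a_1b_1,\dots,a_{T+1}b_{T+1}=a_1b_1$, and write the segment from $a_rb_r$ to $a_{r+1}b_{r+1}$ as $(a_rb_r,k^l,a_{r+1}b_{r+1})$ with $l$ the common index; its projection is a length-2 walk from $S_x$ to $S_y$, with $x$ the element of $\{a_r,b_r\}$ other than $l$ and $y$ that of $\{a_{r+1},b_{r+1}\}$ other than $l$. Starting from empty walks at $S_{a_1}$ and $S_{b_1}$, for $r=1,\dots,T$ append the projected segment to whichever current walk ends at $S_x$. If the final walks $W',W''$ are both closed, $C$ is direct and $\pi(C)=\{W',W''\}$; otherwise $C$ is twisted and $\pi(C)=W'\sqcup W''$ (the closed walk traversing $W'$ then $W''$). Liftings: a cycle $C$ of $G^{[2]}_{A,B}$ is a lifting of the cycle $W$ of $G_{A,B}$ if it projects to $W$ (up to choice of starting vertex), i.e. either $C$ is twisted and $\pi(C)=W$, in which case $C$ is an internal lifting of $W$; or $C$ is direct with $\pi(C)=\{W',W''\}$ where one of $W',W''$ is empty and the other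 is $W$, in which case $C$ is an external lifting of $W$. *)

(* Defs.v *)
From mathcomp Require Import all_boot all_order all_algebra.
Set Implicit Arguments. Unset Strict Implicit. Unset Printing Implicit Defensive.
Import GRing.Theory.
Local Open Scope ring_scope.

(* Generic DSR graph G_{A,B} for A : S -> R -> K (A s r = A_{sr}) and  *)
(* B : R -> S -> K (B r s = B_{rs}).  Vertices: inl s = S-vertex,       *)
(* inr r = R-vertex.  Between S_s and R_r there is at most one          *)
(* traversable edge in each direction (an arc or the merged undirected  *)
(* edge), so a walk is determined by its vertex sequence; dsr_adj u v   *)
(* says one can step from u to v along an edge consistently with its    *)
(* orientation.  A cycle is represented by the list [v1; ...; vL] of    *)
(* its vertices (the closing vertex v_{L+1} = v1 omitted); cycles that  *)
(* differ only by the choice of starting vertex are rotations (rot).    *)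
Section DSR.
Variables (S R : eqType) (K : zmodType) (A : S -> R -> K) (B : R -> S -> K).

Definition dsr_adj : rel (S + R) := fun u v =>
  match u, v with
  | inr r, inl s => A s r != 0
  | inl s, inr r => B r s != 0
  | _, _ => false
  end.

End DSR.

Definition dsr_cycle (V : eqType) (e : rel V) (c : seq V) : bool :=
  [&& c != [::], cycle e c & uniq c].

(* S-vertices ij = ji of G^[2], represented by the increasing pair (i,j), i<j *)
Definition S2 (n : nat) := {p : 'I_n * 'I_n | (p.1 < p.2)%N}.
(* R-vertices k^l represented by (k, l) *)
Definition R2 (n m : nat) := ('I_m * 'I_n)%type.

Definition V1 (n m : nat) := ('I_n + 'I_m)%type.
Definition V2 (n m : nat) := (S2 n + R2 n m)%type.

Section Compound.
Variables (K : zmodType) (n m : nat) (A : 'M[K]_(n, m)) (B : 'M[K]_(m, n)).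

Definition LA (s : S2 n) (c : R2 n m) : K :=
  let i := (val s).1 in let j := (val s).2 in let k := c.1 in let l := c.2 in
  if l == i then A j k else if l == j then - A i k else 0.

Definition LB (c : R2 n m) (s : S2 n) : K :=
  let i := (val s).1 in let j := (val s).2 in let k := c.1 in let l := c.2 in
  if l == i then B k j else if l == j then - B k i else 0.

Definition G1_adj : rel (V1 n m) := dsr_adj (fun i k => A i k) (fun k i => B k i).
Definition G2_adj : rel (V2 n m) := dsr_adj LA LB.
End Compound.

Section Projection.
Variables (n m : nat).

(* a walk of G_{A,B}: its initial vertex and the list of subsequent vertices *)
Definition walk := (V1 n m * seq (V1 n m))%type.
Definition wend (w : walk) : V1 n m := last w.1 w.2.
Definition wclosed (w : walk) : bool := wend w == w.1.
Definition wempty (w : walk) : bool := w.2 == [::].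
Definition wcat (w1 w2 : walk) : walk := (w1.1, w1.2 ++ w2.2).

Definition other (p : 'I_n * 'I_n) (l : 'I_n) : 'I_n := if p.1 == l then p.2 else p.1.

(* the segments (a_r b_r, k^l, a_{r+1} b_{r+1}) of a cycle list starting
   at an S-vertex, with wrap-around to the first vertex *)
Fixpoint segs (first : V2 n m) (c : seq (V2 n m)) : seq (V2 n m * V2 n m * V2 n m) :=
  match c with
  | s :: r :: rest => (s, r, head first rest) :: segs first rest
  | _ => [::]
  end.

Definition proj_step (st : walk * walk) (seg : V2 n m * V2 n m * V2 n m) : walk * walk :=
  match seg with
  | (inl sp, inr (k, l), inl sp') =>
      let x := other (val sp) l in
      let y := other (val sp') l in
      let ext (w : walk) : walk := (w.1, w.2 ++ [:: inr k; inl y]) in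
      if wend st.1 == inl x then (ext st.1, st.2) else (st.1, ext st.2)
  | _ => st
  end.

Definition proj_walks (c : seq (V2 n m)) : option (walk * walk) :=
  match c with
  | inl s :: _ =>
      Some (foldl proj_step ((inl (val s).1, [::]), (inl (val s).2, [::]))
                  (segs (inl s) c))
  | _ => None
  end.

Definition walk_is_cycle (w : walk) (W : seq (V1 n m)) : Prop :=
  wclosed w /\ exists r : nat, w.2 = rot r W.

Definition external_lifting (C : seq (V2 n m)) (W : seq (V1 n m)) : Prop :=
  exists r : nat, exists w1 w2 : walk,
    proj_walks (rot r C) = Some (w1, w2) /\ wclosed w1 /\ wclosed w2 /\
    ((wempty w1 /\ walk_is_cycle w2 W) \/ (wempty w2 /\ walk_is_cycle w1 W)).

Definition internal_lifting (C : seq (V2 n m)) (W : seq (V1 n m)) : Prop :=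
  exists r : nat, exists w1 w2 : walk,
    proj_walks (rot r C) = Some (w1, w2) /\ ~~ (wclosed w1 && wclosed w2) /\
    walk_is_cycle (wcat w1 w2) W.
End Projection.

Definition Wlist (n m : nat) (ii : seq 'I_n) (jj : seq 'I_m) : seq (V1 n m) :=
  flatten [seq [:: inl ij.1; inr ij.2] | ij <- zip ii jj].

Definition upair (n : nat) (i j : 'I_n) : 'I_n * 'I_n :=
  if (i < j)%N then (i, j) else (j, i).

Definition vval (n m : nat) (v : V2 n m) : ('I_n * 'I_n) + R2 n m :=
  match v with inl s => inl (val s) | inr r => inr r end.

Definition ext_form (n m : nat) (ii : seq 'I_n) (jj : seq 'I_m) (p : 'I_n)
  : seq (('I_n * 'I_n) + R2 n m) :=
  flatten [seq [:: inl (upair ij.1 p); inr (ij.2, p)] | ij <- zip ii jj].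

(* Main.v *)
Require Import Defs.
From mathcomp Require Import all_boot all_order all_algebra zify.
Set Implicit Arguments. Unset Strict Implicit. Unset Printing Implicit Defensive.


Section Gen.
Variables (A B T : Type) (f : A * B -> seq T).
Definition GW (a : seq A) (b : seq B) := flatten [seq f ij | ij <- zip a b].
Hypothesis f2 : forall x, size (f x) = 2.

Lemma GW_cat a b c d : size a = size b -> GW (a ++ c) (b ++ d) = GW a b ++ GW c d.
Proof. by move=> h; rewrite /GW zip_cat // map_cat flatten_cat. Qed.

Lemma GW_size a b : size a = size b -> size (GW a b) = 2 * size a.
Proof.
elim: a b => [|x a IH] [|y b] //= [h]; by rewrite size_cat f2 IH // mulnS.
Qed.

Lemma GW_rot u a b : u <= size a -> size a = size b ->
  rot (2 * u) (GW a b) = GW (rot u a) (rot u b).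
Proof.
move=> hu hab.
have ht : size (take u a) = size (take u b) by rewrite !size_takel // -hab.
have hd : size (drop u a) = size (drop u b) by rewrite !size_drop hab.
rewrite -{1}(cat_take_drop u a) -{1}(cat_take_drop u b) GW_cat //.
rewrite /(rot u a) /(rot u b) GW_cat //.
by rewrite -{1}(size_takel hu) -(GW_size ht) rot_size_cat.
Qed.
End Gen.

Lemma Wlist_GW n m (ii : seq 'I_n) (jj : seq 'I_m) :
  Wlist ii jj = GW (fun ij => [:: inl ij.1; inr ij.2]) ii jj.
Proof. by []. Qed.

Lemma ext_GW n m (ii : seq 'I_n) (jj : seq 'I_m) p :
  @ext_form n m ii jj p = GW (fun ij => [:: inl (upair ij.1 p); inr (ij.2, p)]) ii jj.
Proof. by []. Qed.

Lemma Wlist_inj n m (a c : seq 'I_n) (b d : seq 'I_m) :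
  size a = size b -> size c = size d -> Wlist a b = Wlist c d -> a = c /\ b = d.
Proof.
elim: a b c d => [|x a IH] [|y b] [|z c] [|w d] //= [h1] [h2] [] -> -> E.
by case: (IH b c d h1 h2 E) => -> ->.
Qed.


Lemma other_upair n (x q : 'I_n) : x != q -> other (upair x q) q = x.
Proof.
rewrite /other /upair => h; case: (x < q)%N => /=; first by rewrite (negbTE h).
by rewrite eqxx.
Qed.

Lemma upair_ne n (x q : 'I_n) : ((upair x q).1 < (upair x q).2)%N -> x != q.
Proof. by rewrite /upair; case: ifP => _ /=; apply: contraTneq => ->; rewrite ltnn. Qed.

Lemma upair_other n (p : 'I_n * 'I_n) q : (p.1 < p.2)%N -> (q == p.1) || (q == p.2) ->
  p = upair (other p q) q.
Proof.
case: p => a b /= hab /orP [] /eqP ->; rewrite /other /upair /=.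
  by rewrite eqxx ltnNge (ltnW hab).
have -> : (a == b) = false by apply/negbTE; apply: contraTneq hab => ->; rewrite ltnn.
by rewrite hab.
Qed.

Lemma other_ne n (p : 'I_n * 'I_n) l : (p.1 < p.2)%N -> (l == p.1) || (l == p.2) ->
  (other p l != l) /\ (l == p.1) || (l == p.2).
Proof.
case: p => a b /= hab H; split=> //; rewrite /other /=.
have nab : a != b by apply: contraTneq hab => ->; rewrite ltnn.
case/orP: H => /eqP ->; first by rewrite eqxx eq_sym.
by rewrite (negbTE nab).
Qed.

Lemma adjSR (K : zmodType) n m (A : 'M[K]_(n, m)) B (s : S2 n) k l :
  G2_adj A B (inl s) (inr (k,l)) -> (l == (val s).1) || (l == (val s).2).
Proof.
rewrite /G2_adj /dsr_adj /LB /=.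
by case: (l == _); case: (l == _); rewrite ?eqxx.
Qed.

Lemma adjRS (K : zmodType) n m (A : 'M[K]_(n, m)) B (s : S2 n) k l :
  G2_adj A B (inr (k,l)) (inl s) -> (l == (val s).1) || (l == (val s).2).
Proof.
rewrite /G2_adj /dsr_adj /LA /=.
by case: (l == _); case: (l == _); rewrite ?eqxx.
Qed.

Lemma fold_pre n m (sg : seq (V2 n m * V2 n m * V2 n m)) (st : walk n m * walk n m) :
  exists e1 e2, foldl (@proj_step n m) st sg =
    ((st.1.1, st.1.2 ++ e1), (st.2.1, st.2.2 ++ e2)).
Proof.
elim: sg st => [|[[u v] w] sg IH] [[a1 l1] [a2 l2]] /=.
  by exists [::], [::]; rewrite !cats0.
have [e1 [e2 ->]] := IH (proj_step ((a1, l1), (a2, l2)) (u, v, w)).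
case: u => [s|r]; try by exists e1, e2.
case: v => [s'|[k l]]; try by exists e1, e2.
case: w => [s''|r]; try by exists e1, e2.
rewrite /proj_step /=; case: ifP => _ /=.
  by exists ([:: inr k; inl (other (val s'') l)] ++ e1), e2; rewrite catA.
by exists e1, ([:: inr k; inl (other (val s'') l)] ++ e2); rewrite catA.
Qed.

Definition Ext n m (ks : seq 'I_m) (ys : seq 'I_n) : seq (V1 n m) :=
  flatten [seq [:: inr ky.1; inl ky.2] | ky <- zip ks ys].


Lemma other_eq n (p : 'I_n * 'I_n) q l : (p.1 < p.2)%N -> (q == p.1) || (q == p.2) ->
  (l == p.1) || (l == p.2) -> l != q -> other p l = q.
Proof.
case: p => a b /= hab; rewrite /other /=.
have nab : a != b by apply: contraTneq hab => ->; rewrite ltnn.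
by case/orP=> /eqP -> /orP [] /eqP ->; rewrite ?eqxx ?(negbTE nab) // eqxx.
Qed.

Lemma wend_ext n m (w : walk n m) a b : wend (w.1, w.2 ++ [:: a; b]) = b.
Proof. by rewrite /wend /= last_cat. Qed.

Lemma stepA n m (st : walk n m * walk n m) (s s' : S2 n) k l q rest :
  (q == (val s).1) || (q == (val s).2) -> (l == (val s).1) || (l == (val s).2) ->
  wend st.1 = inl q ->
  (size (foldl (@proj_step n m) (proj_step st (inl s, inr (k, l), inl s')) rest).1.2
     <= size st.1.2)%N ->
  l = q /\ proj_step st (inl s, inr (k, l), inl s') =
     (st.1, (st.2.1, st.2.2 ++ [:: inr k; inl (other (val s') l)])).
Proof.
move=> hq hl he; rewrite /proj_step /=.
have hs := valP s.
case: ifP => hx.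
  case: (fold_pre rest ((st.1.1, st.1.2 ++ [:: inr k; inl (other (val s') l)]), st.2))
    => [e1 [e2 ->]] /=.
  rewrite !size_cat /= => h; exfalso; lia.
move=> _; split=> //.
apply/eqP; apply: contraFT hx => hlq.
by rewrite he (other_eq hs hq hl hlq).
Qed.

Lemma stepB n m (st : walk n m * walk n m) (s s' : S2 n) k l q rest :
  (q == (val s).1) || (q == (val s).2) -> (l == (val s).1) || (l == (val s).2) ->
  wend st.2 = inl q -> wend st.1 = inl (other (val s) q) ->
  (size (foldl (@proj_step n m) (proj_step st (inl s, inr (k, l), inl s')) rest).2.2
     <= size st.2.2)%N ->
  l = q /\ proj_step st (inl s, inr (k, l), inl s') =
     ((st.1.1, st.1.2 ++ [:: inr k; inl (other (val s') l)]), st.2).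
Proof.
move=> hq hl he2 he1; rewrite /proj_step /=.
have hs := valP s.
have [hne _] := other_ne hs hq.
case: (eqVneq l q) => [->|hlq].
  by rewrite he1 eqxx.
rewrite (other_eq hs hq hl hlq) he1 (inj_eq (@inl_inj _ _)) (negbTE hne).
case: (fold_pre rest (st.1, (st.2.1, st.2.2 ++ [:: inr k; inl (other (val s') l)])))
    => [e1 [e2 ->]] /=.
by rewrite !size_cat /= => h; exfalso; lia.
Qed.


Arguments proj_step : simpl never.

Lemma fwdA (K : zmodType) n m (A : 'M[K]_(n, m)) B (sf : S2 n) q N :
  forall p (s : S2 n) (st : walk n m * walk n m), (size p <= N)%N ->
  path (G2_adj A B) (inl s) (rcons p (inl sf)) -> wend st.1 = inl q ->
  (q == (val s).1) || (q == (val s).2) ->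
  (size (foldl (@proj_step n m) st (segs (inl sf) (inl s :: p))).1.2 <= size st.1.2)%N ->
  exists xs ks, size xs = size ks /\ map (@vval n m) (inl s :: p) = ext_form xs ks q.
Proof.
elim: N => [|N IH] [|[v|[k l]] p] s st //= hN /andP [h1 h2] he hq hsz.
have hl := @adjSR K n m A B s k l h1.
have hs := valP s.
case: p hN h2 hsz => [|[s'|r] p] /= hN h2 hsz.
- have [lq Hst] := @stepA n m st s sf k l q [::] hq hl he hsz; subst l.
  exists [:: other (val s) q], [:: k]; split=> //=.
  by rewrite /ext_form /= -(upair_other hs hq).
- have [lq Hst] := stepA hq hl he hsz; subst l.
  move/andP: h2 => [h3 h4].
  have hq' := @adjRS K n m A B s' k q h3.
  rewrite Hst in hsz.
  have [|xs [ks [hsz' hm]]] := IH p s' (st.1, (st.2.1, st.2.2 ++ [:: inr k; inl (other (val s') q)])) _ h4 he hq' hsz.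
    by lia.
  exists (other (val s) q :: xs), (k :: ks); split; first by rewrite /= hsz'.
  transitivity (inl (val s) :: inr (k, q) :: ext_form xs ks q); first by rewrite -hm.
  by rewrite /ext_form /= -(upair_other hs hq).
- by move: h2.
Qed.

Lemma fwdB (K : zmodType) n m (A : 'M[K]_(n, m)) B (sf : S2 n) q N :
  forall p (s : S2 n) (st : walk n m * walk n m), (size p <= N)%N ->
  path (G2_adj A B) (inl s) (rcons p (inl sf)) -> wend st.2 = inl q ->
  wend st.1 = inl (other (val s) q) ->
  (q == (val s).1) || (q == (val s).2) ->
  (size (foldl (@proj_step n m) st (segs (inl sf) (inl s :: p))).2.2 <= size st.2.2)%N ->
  exists xs ks, size xs = size ks /\ map (@vval n m) (inl s :: p) = ext_form xs ks q.
Proof.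
elim: N => [|N IH] [|[v|[k l]] p] s st //= hN /andP [h1 h2] he2 he1 hq hsz.
have hl := @adjSR K n m A B s k l h1.
have hs := valP s.
case: p hN h2 hsz => [|[s'|r] p] /= hN h2 hsz.
- have [lq Hst] := @stepB n m st s sf k l q [::] hq hl he2 he1 hsz; subst l.
  exists [:: other (val s) q], [:: k]; split=> //=.
  by rewrite /ext_form /= -(upair_other hs hq).
- have [lq Hst] := stepB hq hl he2 he1 hsz; subst l.
  move/andP: h2 => [h3 h4].
  have hq' := @adjRS K n m A B s' k q h3.
  rewrite Hst in hsz.
  have [|xs [ks [hsz' hm]]] := IH p s' ((st.1.1, st.1.2 ++ [:: inr k; inl (other (val s') q)]), st.2) _ h4 he2 (wend_ext _ _ _) hq' hsz.
    by lia.
  exists (other (val s) q :: xs), (k :: ks); split; first by rewrite /= hsz'.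
  transitivity (inl (val s) :: inr (k, q) :: ext_form xs ks q); first by rewrite -hm.
  by rewrite /ext_form /= -(upair_other hs hq).
- by move: h2.
Qed.


Arguments proj_step : simpl never.

Lemma ext_cons n m x (xs : seq 'I_n) (k : 'I_m) ks q :
  ext_form (x :: xs) (k :: ks) q = inl (upair x q) :: inr (k, q) :: ext_form xs ks q.
Proof. by []. Qed.

Lemma ext_nil n m (ks : seq 'I_m) q : @ext_form n m [::] ks q = [::].
Proof. by case: ks. Qed.

Lemma Ext_cons n m k (ks : seq 'I_m) (xs : seq 'I_n) y : size xs = size ks ->
  Ext (k :: ks) (rcons xs y) = [:: inr k; inl (head y xs)] ++ Ext ks (rcons (behead xs) y).
Proof. by case: xs ks => [|x xs] [|k' ks]. Qed.

Lemma head_lem n m (sf : S2 n) q y (xs : seq 'I_n) (ks : seq 'I_m) (c : seq (V2 n m)) :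
  val sf = upair y q -> size xs = size ks -> map (@vval n m) c = ext_form xs ks q ->
  exists s'', head (inl sf) c = inl s'' /\ val s'' = upair (head y xs) q.
Proof.
move=> hy; case: xs ks c => [|x xs] [|k ks] [|v c] //=; try by exists sf.
by move=> _; case: v => // s [] <- _; exists s.
Qed.

Lemma shapeA n m (sf : S2 n) q y : val sf = upair y q ->
  forall xs ks c (st : walk n m * walk n m), size xs = size ks ->
  map (@vval n m) c = ext_form xs ks q -> wend st.1 = inl q ->
  foldl (@proj_step n m) st (segs (inl sf) c) =
    (st.1, (st.2.1, st.2.2 ++ Ext ks (rcons (behead xs) y))).
Proof.
move=> hy; elim=> [|x xs IH] [|k ks] c st //=.
  by case: c => // _ _ _; case: st => a [b l] /=; rewrite cats0.
move=> [hs]; rewrite ext_cons.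
case: c => [|[s|r] [|[s1|[k' l']] c]] //= [hv [-> ->]] hm he.
have [s'' [hh hv'']] := head_lem hy hs hm.
rewrite hh.
have hx : x != q by apply: upair_ne; rewrite -hv; exact: valP s.
have hy' : head y xs != q by apply: upair_ne; rewrite -hv''; exact: valP s''.
have -> : proj_step st (inl s, inr (k, q), inl s'') =
   (st.1, (st.2.1, st.2.2 ++ [:: inr k; inl (head y xs)])).
  rewrite /proj_step /= hv hv'' !other_upair // he.
  by rewrite (inj_eq (@inl_inj _ _)) eq_sym (negbTE hx).
rewrite (IH ks c) //=; first by rewrite -catA -Ext_cons.
Qed.

Lemma shapeB n m (sf : S2 n) q y : val sf = upair y q ->
  forall xs ks c (st : walk n m * walk n m), size xs = size ks ->
  map (@vval n m) c = ext_form xs ks q -> wend st.2 = inl q ->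
  wend st.1 = inl (head y xs) ->
  foldl (@proj_step n m) st (segs (inl sf) c) =
    ((st.1.1, st.1.2 ++ Ext ks (rcons (behead xs) y)), st.2).
Proof.
move=> hy; elim=> [|x xs IH] [|k ks] c st //=.
  by case: c => // _ _ _; case: st => [[a l] b] /=; rewrite cats0.
move=> [hs]; rewrite ext_cons.
case: c => [|[s|r] [|[s1|[k' l']] c]] //= [hv [-> ->]] hm he2 he1.
have [s'' [hh hv'']] := head_lem hy hs hm.
rewrite hh.
have hx : x != q by apply: upair_ne; rewrite -hv; exact: valP s.
have hy' : head y xs != q by apply: upair_ne; rewrite -hv''; exact: valP s''.
have -> : proj_step st (inl s, inr (k, q), inl s'') =
   ((st.1.1, st.1.2 ++ [:: inr k; inl (head y xs)]), st.2).
  by rewrite /proj_step /= hv hv'' !other_upair // he1 eqxx.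
rewrite (IH ks c) //= ?wend_ext //; first by rewrite -catA -Ext_cons.
Qed.


Arguments proj_step : simpl never.

Definition ends_ok n m (st : walk n m * walk n m) (p : 'I_n * 'I_n) :=
  ((wend st.1 == inl p.1) && (wend st.2 == inl p.2)) ||
  ((wend st.1 == inl p.2) && (wend st.2 == inl p.1)).

Lemma ne_of_lt n (a b : 'I_n) : (a < b)%N -> (a == b) = false.
Proof. by move=> h; apply/negbTE; apply: contraTneq h => ->; rewrite ltnn. Qed.

Lemma step_ends n m (st : walk n m * walk n m) (s s' : S2 n) k l :
  (l == (val s).1) || (l == (val s).2) -> (l == (val s').1) || (l == (val s').2) ->
  ends_ok st (val s) -> ends_ok (proj_step st (inl s, inr (k, l), inl s')) (val s').
Proof.
rewrite /proj_step /=.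
case: s => [[a b] /= hab]; case: s' => [[c d] /= hcd].
have nab := ne_of_lt hab; have ncd := ne_of_lt hcd.
have nba : (b == a) = false by rewrite eq_sym.
have ndc : (d == c) = false by rewrite eq_sym.
move=> hl hl'.
rewrite /ends_ok /= => /orP [] /andP [] /eqP e1 /eqP e2; rewrite e1;
case: ifP => hx; rewrite /= ?wend_ext ?e1 ?e2 /other /=;
move: hx; rewrite /other /= !(inj_eq (@inl_inj _ _));
case/orP: hl => /eqP ?; subst l; case/orP: hl' => /eqP ?; subst;
rewrite ?eqxx ?nab ?ncd ?nba ?ndc //=;
try by do ![case: eqP => //= ?; subst].
Qed.

Definition VS n m (st : walk n m * walk n m) (a : 'I_n) :=
  (inl a \in st.1.1 :: st.1.2) || (inl a \in st.2.1 :: st.2.2).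

Lemma VS_mono n m sg (st : walk n m * walk n m) a : VS st a -> VS (foldl (@proj_step n m) st sg) a.
Proof.
have [e1 [e2 ->]] := fold_pre sg st.
by rewrite /VS /= !inE !mem_cat => /orP [] /orP [] ->; rewrite ?orbT.
Qed.

Lemma ends_VS n m (st : walk n m * walk n m) p : ends_ok st p -> VS st p.1 /\ VS st p.2.
Proof.
have h1 := mem_last st.1.1 st.1.2; have h2 := mem_last st.2.1 st.2.2.
rewrite /ends_ok /VS /wend in h1 h2 * => /orP [] /andP [] /eqP e1 /eqP e2.
  by rewrite -e1 -e2 h1 h2 orbT.
by rewrite -e1 -e2 h1 h2 orbT.
Qed.

Lemma ends_inv (K : zmodType) n m (A : 'M[K]_(n, m)) B (sf : S2 n) N :
  forall p (s : S2 n) (st : walk n m * walk n m), (size p <= N)%N ->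
  path (G2_adj A B) (inl s) (rcons p (inl sf)) -> ends_ok st (val s) ->
  ends_ok (foldl (@proj_step n m) st (segs (inl sf) (inl s :: p))) (val sf) /\
  forall t, inl t \in (inl s :: p) ->
    VS (foldl (@proj_step n m) st (segs (inl sf) (inl s :: p))) (val t).1 /\
    VS (foldl (@proj_step n m) st (segs (inl sf) (inl s :: p))) (val t).2.
Proof.
elim: N => [|N IH] [|[v|[k l]] p] s st //= hN /andP [h1 h2] he.
have hl := @adjSR K n m A B s k l h1.
have [hv1 hv2] := ends_VS he.
case: p hN h2 => [|[s'|r] p] /= hN h2.
- have hl' := @adjRS K n m A B sf k l (andP h2).1.
  split; first exact: step_ends.
  move=> t; rewrite !inE => /orP [/eqP [->]|] //.
  split; exact: (@VS_mono n m [:: (inl s, inr (k, l), inl sf)]).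
- move/andP: h2 => [h3 h4].
  have hl' := @adjRS K n m A B s' k l h3.
  have [|E M] := IH p s' (proj_step st (inl s, inr (k, l), inl s')) _ h4 (step_ends _ hl hl' he).
    by lia.
  split=> // t; rewrite inE => /orP [/eqP [->]|]; last by rewrite inE => /orP [/eqP //|]; exact: M.
  split; exact: (@VS_mono n m ((inl s, inr (k, l), inl s') :: segs (inl sf) (inl s' :: p)) st).
- by move: h2.
Qed.


Lemma Ext_rcons n m k (ks : seq 'I_m) (xs : seq 'I_n) x : size xs = size ks ->
  Ext (k :: ks) (rcons xs x) = inr k :: rcons (Wlist xs ks) (inl x).
Proof.
elim: xs k ks => [|y xs IH] k [|k' ks] //= [h].
by rewrite -[Ext _ _]/([:: inr k; inl y] ++ Ext (k' :: ks) (rcons xs x)) IH.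
Qed.

Lemma Ext_rot n m k (ks : seq 'I_m) x (xs : seq 'I_n) : size xs = size ks ->
  Ext (k :: ks) (rcons xs x) = rot 1 (Wlist (x :: xs) (k :: ks)).
Proof.
move=> h; rewrite Ext_rcons //.
by have -> : Wlist (x :: xs) (k :: ks) = inl x :: inr k :: Wlist xs ks by []; rewrite rot1_cons.
Qed.

Lemma Wrot n m u (ii : seq 'I_n) (jj : seq 'I_m) : (u <= size ii)%N -> size ii = size jj ->
  rot (2 * u) (Wlist ii jj) = Wlist (rot u ii) (rot u jj).
Proof. by move=> hu hs; rewrite !Wlist_GW GW_rot. Qed.

Lemma Erot n m u (ii : seq 'I_n) (jj : seq 'I_m) p : (u <= size ii)%N -> size ii = size jj ->
  rot (2 * u) (ext_form ii jj p) = ext_form (rot u ii) (rot u jj) p.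
Proof. by move=> hu hs; rewrite !ext_GW GW_rot. Qed.

Lemma Wsize n m (ii : seq 'I_n) (jj : seq 'I_m) : size ii = size jj ->
  size (Wlist ii jj) = 2 * size ii.
Proof. by move=> h; rewrite Wlist_GW GW_size. Qed.

Lemma parity n m (ii xs : seq 'I_n) (jj ks : seq 'I_m) x k t :
  size ii = size jj -> size xs = size ks ->
  rot 1 (Wlist (x :: xs) (k :: ks)) = rot t (Wlist ii jj) ->
  exists u, (u <= size ii)%N /\ x :: xs = rot u ii /\ k :: ks = rot u jj.
Proof.
move=> hij hxk.
have [t' [-> ht']] : exists t', rot t (Wlist ii jj) = rot t' (Wlist ii jj) /\
    ((t' < 2 * size ii)%N \/ t' = 0).
  case: (ltnP t (2 * size ii)) => h; first by exists t; split=> //; left.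
  by exists 0; split; [rewrite rot_oversize ?rot0 // (Wsize hij) | right].
have -> : t' = odd t' + (t'./2) * 2 by rewrite muln2 odd_double_half.
rewrite [_ * 2]mulnC.
set u := t'./2.
have hu : (u <= size ii)%N by case: ht' => [h|h]; rewrite /u; [lia | rewrite h].
case ho: (odd t').
  have hu' : (u < size ii)%N by case: ht' => [h|h]; [rewrite /u; lia | move: ho; rewrite h].
  have -> : rot (true + 2 * u) (Wlist ii jj) = rot 1 (rot (2 * u) (Wlist ii jj)).
    by rewrite -rotD // (Wsize hij); lia.
  rewrite Wrot // => /rot_inj /Wlist_inj []; [by rewrite /= hxk | by rewrite !size_rot |].
  by move=> -> ->; exists u.
have -> : rot (false + 2 * u) (Wlist ii jj) = rot (2 * u) (Wlist ii jj) by [].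
rewrite Wrot //.
case: (rot u ii) => [|a r1]; case: (rot u jj) => [|b r2] //=.
Qed.

Lemma notin_ext n m (c : seq (V2 n m)) xs (ks : seq 'I_m) q : size xs = size ks ->
  map (@vval n m) c = ext_form xs ks q -> q \notin xs.
Proof.
elim: xs ks c => [|x xs IH] [|k ks] [|[s|r] [|v c]] //= [h] [hv] _ hm.
rewrite inE negb_or (IH ks c h hm) andbT eq_sym.
by apply: upair_ne; rewrite -hv; exact: valP s.
Qed.

Lemma finish n m (C : seq (V2 n m)) r (ii : seq 'I_n) jj x xs k (ks : seq 'I_m) q t :
  size ii = size jj -> size xs = size ks ->
  map (@vval n m) (rot r C) = ext_form (x :: xs) (k :: ks) q ->
  Ext (k :: ks) (rcons xs x) = rot t (Wlist ii jj) ->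
  exists p, p \notin ii /\ exists r', map (@vval n m) (rot r' C) = ext_form ii jj p.
Proof.
move=> hij hxk hm; rewrite Ext_rot // => E.
have [u [hu [ex ek]]] := parity hij hxk E.
exists q; split.
  have H := notin_ext (c := rot r C) (xs := x :: xs) (ks := k :: ks) (q := q).
  have H' : q \notin x :: xs by apply: H => //=; rewrite hxk.
  by move: H'; rewrite ex mem_rot.
exists (rot_add C r (size (rot r C) - 2 * u)).
rewrite -rot_rot_add.
change (rot (size (rot r C) - 2 * u) (rot r C)) with (rotr (2 * u) (rot r C)).
by rewrite map_rotr hm ex ek -Erot // rotK.
Qed.

Lemma last_mem (T : eqType) (x : T) s : last x s != x -> last x s \in s.
Proof. by have := mem_last x s; rewrite inE => /orP [/eqP ->|//]; rewrite eqxx. Qed.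

Lemma mem_Wlist n m (ii : seq 'I_n) (jj : seq 'I_m) a : inl a \in Wlist ii jj -> a \in ii.
Proof.
elim: ii jj => [|i ii IH] [|j jj] //=; rewrite !inE => /orP [/eqP [->]|/orP [//|]].
  by rewrite eqxx.
by move/IH => ->; rewrite orbT.
Qed.

Arguments proj_step : simpl never.

Unset Implicit Arguments.
Local Open Scope ring_scope.

Theorem proposition5p5 (K : realFieldType) (n m : nat)
  (A : 'M[K]_(n, m)) (B : 'M[K]_(m, n)) (ii : seq 'I_n) (jj : seq 'I_m) :
  (2 <= n)%N ->
  size ii = size jj ->
  dsr_cycle (G1_adj A B) (Wlist ii jj) ->
  (forall C : seq (V2 n m), dsr_cycle (G2_adj A B) C ->
     (external_lifting C (Wlist ii jj) <->
      exists p : 'I_n, p \notin ii /\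
        exists r : nat, map (@vval n m) (rot r C) = @ext_form n m ii jj p))
  /\
  (forall C : seq (V2 n m), dsr_cycle (G2_adj A B) C ->
     internal_lifting C (Wlist ii jj) ->
     forall s : S2 n, inl s \in C -> (val s).1 \in ii /\ (val s).2 \in ii).
Proof.
move=> _ hij _; split.
  move=> C hC; split.
    case=> r [w1 [w2 [Hp [hc1 [hc2 Hcase]]]]].
    have hcyc : cycle (G2_adj A B) (rot r C) by rewrite rot_cycle; case/and3P: hC.
    move: Hp hcyc; case E: (rot r C) => [|[s0|r0] p] //= [Hfold] hcyc.
    have hs := valP s0.
    case: Hcase => [[he1 [hw2c [t ht]]] | [he2 [hw1c [t ht]]]].
    - have hq : ((val s0).1 == (val s0).1) || ((val s0).1 == (val s0).2) by rewrite eqxx.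
      have hz : (size (foldl (@proj_step n m) ((inl (val s0).1, [::]), (inl (val s0).2, [::]))
               (segs (inl s0) (inl s0 :: p))).1.2 <= 0)%N.
        by rewrite Hfold /=; move: he1; rewrite /wempty => /eqP ->.
      have [xs [ks [hxk hm]]] := @fwdA K n m A B s0 (val s0).1 (size p) p s0
         ((inl (val s0).1, [::]), (inl (val s0).2, [::])) (leqnn _) hcyc erefl hq hz.
      case: xs ks hxk hm => [|x xs] [|k ks] // [hxk] hm.
      have hv : val s0 = upair x (val s0).1 by case: hm.
      have hxk' : size (x :: xs) = size (k :: ks) by rewrite /= hxk.
      have := @shapeA n m s0 (val s0).1 x hv (x :: xs) (k :: ks) (inl s0 :: p)
         ((inl (val s0).1, [::]), (inl (val s0).2, [::])) hxk' hm erefl.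
      rewrite Hfold => -[_ Hw]; rewrite Hw /= in ht.
      exact: (finish (C:=C) (r:=r) hij hxk (etrans (congr1 _ E) hm) ht).
    - have hq : ((val s0).2 == (val s0).1) || ((val s0).2 == (val s0).2) by rewrite eqxx orbT.
      have ho : other (val s0) (val s0).2 = (val s0).1 by rewrite /other ne_of_lt.
      have hz : (size (foldl (@proj_step n m) ((inl (val s0).1, [::]), (inl (val s0).2, [::]))
               (segs (inl s0) (inl s0 :: p))).2.2 <= 0)%N.
        by rewrite Hfold /=; move: he2; rewrite /wempty => /eqP ->.
      have he0 : wend (inl (val s0).1, [::]) = inl (other (val s0) (val s0).2) :> V1 n m by rewrite ho.
      have [xs [ks [hxk hm]]] := @fwdB K n m A B s0 (val s0).2 (size p) p s0
         ((inl (val s0).1, [::]), (inl (val s0).2, [::])) (leqnn _) hcyc erefl he0 hq hz.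
      case: xs ks hxk hm => [|x xs] [|k ks] // [hxk] hm.
      have hv : val s0 = upair x (val s0).2 by case: hm.
      have hx : x = (val s0).1.
        have hxq : x != (val s0).2 by apply: upair_ne; rewrite -hv; exact: hs.
        by have := other_upair hxq; rewrite -hv ho => ->.
      have hxk' : size (x :: xs) = size (k :: ks) by rewrite /= hxk.
      have hx' : wend (inl (val s0).1, [::]) = inl (head x (x :: xs)) :> V1 n m by rewrite /wend /= hx.
      have := @shapeB n m s0 (val s0).2 x hv (x :: xs) (k :: ks) (inl s0 :: p)
         ((inl (val s0).1, [::]), (inl (val s0).2, [::])) hxk' hm erefl hx'.
      rewrite Hfold => -[Hw _]; rewrite Hw /= in ht.
      exact: (finish (C:=C) (r:=r) hij hxk (etrans (congr1 _ E) hm) ht).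
  case=> p0 [hp0 [r hm]].
  have hCn : rot r C != [::] by rewrite -size_eq0 size_rot size_eq0; case/and3P: hC.
  case E: (rot r C) hm hCn => [|v rest] hm hCn //; clear hCn.
  case: ii jj hij hp0 hm => [|i1 ii'] [|j1 jj'] // [hij'] hp0 hm.
  rewrite ext_cons in hm.
  case: v E hm => [s0|r0] E hm; last by case: hm.
  have hv : val s0 = upair i1 p0 by case: hm.
  have hm2 : map (@vval n m) (inl s0 :: rest) = ext_form (i1 :: ii') (j1 :: jj') p0 by rewrite ext_cons.
  have hsz : size (i1 :: ii') = size (j1 :: jj') by rewrite /= hij'.
  have hcl : wclosed ((inl (val s0).1, Ext (j1 :: jj') (rcons ii' i1)) : walk n m) =
             ((val s0).1 == i1).
    by rewrite /wclosed /wend /= Ext_rcons //= last_rcons (inj_eq (@inl_inj _ _)) eq_sym.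
  have hcl' : wclosed ((inl (val s0).2, Ext (j1 :: jj') (rcons ii' i1)) : walk n m) =
             ((val s0).2 == i1).
    by rewrite /wclosed /wend /= Ext_rcons //= last_rcons (inj_eq (@inl_inj _ _)) eq_sym.
  exists r; rewrite E.
  pose st0 : walk n m * walk n m := ((inl (val s0).1, [::]), (inl (val s0).2, [::])).
  case: (ltnP i1 p0) => hlt.
    have hv' : val s0 = (i1, p0) by rewrite hv /upair hlt.
    exists (inl (val s0).1, Ext (j1 :: jj') (rcons ii' i1)), (inl (val s0).2, [::]).
    have he2 : wend st0.2 = inl p0 :> V1 n m
      by rewrite /wend /= hv'.
    have he1 : wend st0.1 = inl (head i1 (i1 :: ii')) :> V1 n m
      by rewrite /wend /= hv'.
    split; first by rewrite /proj_walks (shapeB hv hsz hm2 he2 he1 : foldl _ st0 _ = _).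
    rewrite hcl hv' /= eqxx; split=> //; split; first by rewrite /wclosed /wend /= eqxx.
    right; split=> //; split.
      by rewrite /wclosed /wend /= Ext_rcons //= last_rcons eqxx.
    by exists 1; rewrite Ext_rot.
  have hv' : val s0 = (p0, i1) by rewrite hv /upair ltnNge hlt.
  exists (inl (val s0).1, [::]), (inl (val s0).2, Ext (j1 :: jj') (rcons ii' i1)).
  have he1 : wend st0.1 = inl p0 :> V1 n m
    by rewrite /wend /= hv'.
  split; first by rewrite /proj_walks (shapeA hv hsz hm2 he1 : foldl _ st0 _ = _).
  rewrite hcl' hv' /= eqxx; split; first by rewrite /wclosed /wend /= eqxx.
  split=> //; left; split=> //; split.
    by rewrite /wclosed /wend /= Ext_rcons //= last_rcons eqxx.
  by exists 1; rewrite Ext_rot.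
move=> C hC [r [w1 [w2 [Hp [hnc [hcl [t ht]]]]]]] s hsC.
have hcyc : cycle (G2_adj A B) (rot r C) by rewrite rot_cycle; case/and3P: hC.
move: Hp hcyc; case E: (rot r C) => [|[s0|r0] p] //= [Hfold] hcyc.
pose st0 : walk n m * walk n m := ((inl (val s0).1, [::]), (inl (val s0).2, [::])).
have hs := valP s0.
have he0 : ends_ok st0 (val s0) by rewrite /ends_ok /wend /= !eqxx.
have [Hend Hmem] := @ends_inv K n m A B s0 (size p) p s0 st0 (leqnn _) hcyc he0.
have [e1 [e2 Hpre]] := fold_pre (segs (inl s0) (inl s0 :: p)) st0.
rewrite Hfold in Hend Hmem Hpre.
have hsC' : inl s \in inl s0 :: p by rewrite -E mem_rot.
have [V1 V2] := Hmem s hsC'.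
case: Hpre => ? ?; subst w1 w2.
have hin : forall a, inl a \in e1 ++ e2 -> a \in ii.
  by move=> a; rewrite /= in ht; rewrite ht mem_rot; exact: mem_Wlist.
have nab := ne_of_lt hs.
have [h1 h2] : inl (val s0).2 \in e1 /\ inl (val s0).1 \in e2.
  move: Hend hnc; rewrite /ends_ok /wclosed /=.
  case/orP=> /andP [/eqP E1 /eqP E2]; first by rewrite E1 E2 !eqxx.
  move=> _; split.
    rewrite -E1; apply: last_mem; rewrite /wend /= in E1; rewrite E1.
    by rewrite (inj_eq (@inl_inj _ _)) eq_sym nab.
  rewrite -E2; apply: last_mem; rewrite /wend /= in E2; rewrite E2.
  by rewrite (inj_eq (@inl_inj _ _)) nab.
have hVS : forall a, VS ((inl (val s0).1, e1), (inl (val s0).2, e2)) a -> a \in ii.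
  move=> a; rewrite /VS /= !inE => /orP [] /orP [].
  - by move/eqP => [->]; apply: hin; rewrite mem_cat h2 orbT.
  - by move=> h; apply: hin; rewrite mem_cat h.
  - by move/eqP => [->]; apply: hin; rewrite mem_cat h1.
  - by move=> h; apply: hin; rewrite mem_cat h orbT.
by split; apply: hVS.
Qed.
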